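(* Let $G$ be a finite directed multigraph with vertex set $V$. The map $$H\mapsto P(G)_H:=\{\vec x\in P(G)\mid x_e=0 \text{ for all } e\notin E(H)\}$$ is an isomorphism of posets from the set of full subgraphs $H$ of $G$ with non-empty edge set (ordered by inclusion of edge sets) onto the face poset of $P(G)$ (faces ordered by inclusion). Moreover, identifying $\mathbb{R}^{E(H)}$ with its image under the coordinate inclusion $\mathbb{R}^{E(H)}\hookrightarrow\mathbb{R}^{E(G)}$, one has $P(H)=P(G)_H$, and $$\dim P(G)_H=|E(H)|-|V|+c(H)-1,$$ where $c(H)$ is the number of connected components of $H$ (isolated vertices counted as components).
   Context: For a directed multigraph $G$: a walk is a sequence of edges $(e_1,\dots,e_k)$ with $\mathrm{ar}(e_i)=\mathrm{st}(e_{i+1})$; a cycle is a walk with $\mathrm{st}(e_1)=\mathrm{ar}(e_k)$; a path is a walk with distinct edges and distinct vertices except possibly $\mathrm{st}(e_1)=\mathrm{ar}(e_k)$; a simple cycle is a non-empty cycle that is a path. For a non-empty cycle $\mathcal{C}$, $(\vec{e}_{\mathcal{C}})_e=n_e(\mathcal{C})/|\mathcal{C}|$. $P(G)=\mathrm{conv}\{\vec{e}_{\mathcal{C}}\mid\mathcal{C}\text{ simple cycle of }G\}\subset\mathbb{R}^{E(G)}$. A subgraph of $G$ here means $H=(V,E(H))$ with the same vertex set and $E(H)\subseteq E(G)$ (as multisets); $H$ is full if every edge of $H$ lies on a cycle of $H$. A face of a polytope $\mathfrak p\subset\mathbb{R}^n$ is a set of the form $\mathfrak p_f=\arg\min_{\mathfrak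 p} f$ for some linear form $f:\mathbb{R}^n\to\mathbb{R}$ (faces are thus non-empty, and $\mathfrak p$ itself is a face). The dimension of a polytope is that of its affine span. *)

(* Defs.v *)
From HB Require Import structures.
From mathcomp Require Import all_boot all_order all_algebra.
Set Implicit Arguments. Unset Strict Implicit. Unset Printing Implicit Defensive.
Import Order.TTheory GRing.Theory Num.Theory.
Local Open Scope ring_scope.

(* A finite directed multigraph: vertex type V (finite), edges 'I_m,
   st e = start vertex, ar e = arrival vertex.  A subgraph H (same vertex set)
   is given by its edge set H : {set 'I_m}. *)
Section Graph.
Variables (V : finType) (m : nat) (st ar : 'I_m -> V).

Definition consecutive (e f : 'I_m) : bool := ar e == st f.

Definition is_walk (s : seq 'I_m) : bool :=
  if s is e :: s' then path consecutive e s' else true.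

(* cycle of H: walk in H with st(e_1) = ar(e_k) (the empty walk is a cycle) *)
Definition is_cycle_in (H : {set 'I_m}) (s : seq 'I_m) : bool :=
  all (fun e => e \in H) s && cycle consecutive s.

Definition is_simple_cycle_in (H : {set 'I_m}) (s : seq 'I_m) : bool :=
  [&& s != [::], is_cycle_in H s, uniq s & uniq (map st s)].

Definition full (H : {set 'I_m}) : Prop :=
  forall e, e \in H -> exists s, is_cycle_in H s /\ e \in s.

Definition adjH (H : {set 'I_m}) : rel V :=
  fun u v => [exists e in H, ((st e == u) && (ar e == v)) || ((st e == v) && (ar e == u))].

(* number of connected components of H (isolated vertices count) *)
Definition ncomp (H : {set 'I_m}) : nat := n_comp (adjH H) predT.

Variable R : realFieldType.

Definition cycvec (s : seq 'I_m) : 'rV[R]_m :=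
  \row_(e < m) ((count_mem e s)%:R / (size s)%:R).

Definition conv (S : 'rV[R]_m -> Prop) (x : 'rV[R]_m) : Prop :=
  exists k (p : 'I_k -> 'rV[R]_m) (l : 'I_k -> R),
    [/\ forall i, S (p i), forall i, 0 <= l i, \sum_(i < k) l i = 1
      & x = \sum_(i < k) l i *: p i].

Definition Ppoly (H : {set 'I_m}) : 'rV[R]_m -> Prop :=
  conv (fun x => exists s, is_simple_cycle_in H s /\ x = cycvec s).

Definition Pface (H : {set 'I_m}) (x : 'rV[R]_m) : Prop :=
  Ppoly [set: 'I_m] x /\ forall e, e \notin H -> x 0 e = 0.

Definition linf (c x : 'rV[R]_m) : R := \sum_(e < m) c 0 e * x 0 e.

Definition is_face (P F : 'rV[R]_m -> Prop) : Prop :=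
  (exists x, F x) /\
  exists c : 'rV[R]_m, forall x, F x <-> (P x /\ forall y, P y -> linf c x <= linf c y).

Definition affdim (S : 'rV[R]_m -> Prop) (d : nat) : Prop :=
  exists x0, S x0 /\
  exists B : 'M[R]_(d, m),
    [/\ \rank B = d,
        forall i, exists x, S x /\ row i B = x - x0
      & forall x, S x -> (x - x0 <= B)%MS].

End Graph.
Arguments Ppoly {V m} st ar R H _.
Arguments Pface {V m} st ar R H _.

(* Main.v *)
Require Import Defs.
From HB Require Import structures.
From mathcomp Require Import all_boot all_order all_algebra.
From Stdlib Require ClassicalEpsilon.
From mathcomp Require Import zify ring lra.
Import Order.TTheory GRing.Theory Num.Theory.
Local Open Scope ring_scope.
Set Implicit Arguments. Unset Strict Implicit. Unset Printing Implicit Defensive.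

Section Main.
Variables (V : finType) (m : nat) (st ar : 'I_m -> V) (R : realFieldType).

Local Notation SC := (is_simple_cycle_in st ar).
Local Notation cons_ := (consecutive st ar).

Lemma SC_sub (S1 S2 : {set 'I_m}) s : S1 \subset S2 -> SC S1 s -> SC S2 s.
Proof.
move=> sub /and4P[ne /andP[al cy] u us]; apply/and4P; split=> //.
apply/andP; split=> //; apply/allP => e es; exact: (subsetP sub _ ((allP al) e es)).
Qed.

Lemma walk_suffix p1 h p2 : is_walk st ar (p1 ++ h :: p2) -> path cons_ h p2.
Proof.
case: p1 => [|y p1] /=; first by [].
by rewrite cat_path => /andP[_] /= /andP[_].
Qed.

Lemma findcyc (S : {set 'I_m}) : S != set0 ->
  (forall f, f \in S -> exists2 g, g \in S & st g = ar f) -> exists s, SC S s.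
Proof.
move=> /set0Pn [x0 x0S] succ.
suff: forall n, (exists s, SC S s) \/
   (exists x q, [/\ x \in S, all (mem S) q, path cons_ x q, uniq (map st (x :: q))
                 & size q = n]).
  case/(_ #|V|) => // [[x [q [_ _ _ u sz]]]].
  have := @max_card V (mem (map st (x :: q))).
  by rewrite (card_uniqP u) size_map /= sz ltnn.
elim=> [|n [H|[x [q [xS qS pq u sz]]]]].
- by right; exists x0, [::]; split.
- by left.
have fS : last x q \in S.
  by move: (mem_last x q); rewrite inE => /orP[/eqP->//|/(allP qS)].
have [g gS gE] := succ _ fS.
case: (boolP (ar (last x q) \in map st (x :: q))) => [/mapP [h hin hE]|nin].
  left; have [p1 [p2 E]] : exists p1 p2, x :: q = p1 ++ h :: p2.
    by case/splitPr: hin => p1 p2; exists p1, p2.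
  have lE : last h p2 = last x q by rewrite -[RHS]/(last x0 (x :: q)) E last_cat.
  have wk : is_walk st ar (x :: q) by [].
  rewrite E in wk u.
  have allS : all (mem S) (x :: q) by rewrite /= xS.
  move: allS; rewrite E all_cat => /andP[_ aS].
  exists (h :: p2); apply/and4P; split => //.
  - apply/andP; split => //=; rewrite rcons_path (walk_suffix wk) /consecutive lE hE eqxx.
    done.
  - by move: u; rewrite map_cat cat_uniq => /and3P[_ _] /map_uniq.
  - by move: u; rewrite map_cat cat_uniq => /and3P[_ _].
right; exists x, (rcons q g); split => //.
- by rewrite all_rcons qS andbT.
- by rewrite rcons_path pq /consecutive gE eqxx.
- by rewrite -rcons_cons map_rcons rcons_uniq gE nin u.
- by rewrite size_rcons sz.
Qed.
Definition chi (s : seq 'I_m) : 'rV[R]_m := \row_(e < m) (count_mem e s)%:R.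
Definition circ (y : 'rV[R]_m) := forall v,
  \sum_(e < m | ar e == v) y 0 e = \sum_(e < m | st e == v) y 0 e.

Lemma sum_count (P : pred 'I_m) s :
  \sum_(e < m | P e) ((count_mem e s)%:R : R) = (count P s)%:R.
Proof.
elim: s => [|x s IH] /=; first by rewrite big1.
rewrite (eq_bigr (fun e => (x == e)%:R + (count_mem e s)%:R)); last first.
  by move=> e _; rewrite natrD.
rewrite big_split /= IH natrD; congr (_ + _).
case Px: (P x).
  rewrite (bigD1 x) //= eqxx big1 ?addr0 // => e /andP[_ ne].
  by rewrite eq_sym (negPf ne).
by rewrite big1 // => e Pe; case: eqP => // ex; rewrite ex Pe in Px.
Qed.

Lemma cycvecE s : cycvec R s = (size s)%:R^-1 *: chi s.
Proof. by apply/rowP => e; rewrite !mxE mulrC. Qed.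

Lemma chiE s e : chi s 0 e = (count_mem e s)%:R.
Proof. by rewrite mxE. Qed.

Lemma path_belast x q : path cons_ x q -> map ar (belast x q) = map st q.
Proof. by elim: q x => //= y q IH x /andP[/eqP-> /IH ->]. Qed.

Lemma cycle_map s : cycle cons_ s -> perm_eq (map ar s) (map st s).
Proof.
case: s => // x q cyc.
have : cycle cons_ (x :: q) := cyc.
rewrite /= rcons_path => /andP[pq /eqP la].
have E : map ar (x :: q) = rcons (map st q) (st x).
  by rewrite (lastI x q) map_rcons path_belast // la.
rewrite (_ : ar x :: map ar q = map ar (x :: q)) // E.
by rewrite -cats1 perm_catC.
Qed.

Lemma circ_chi s : cycle cons_ s -> circ (chi s).
Proof.
move=> cs v; rewrite (eq_bigr (fun e => (count_mem e s)%:R)); last by move=> *; rewrite chiE.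
rewrite [RHS](eq_bigr (fun e => (count_mem e s)%:R)); last by move=> *; rewrite chiE.
rewrite !sum_count; congr (_%:R).
rewrite -(count_map ar (pred1 v)) -(count_map st (pred1 v)).
exact/permP/cycle_map.
Qed.


Lemma exmin (T : eqType) (s : seq T) (F : T -> R) : s != [::] ->
  exists2 x, x \in s & forall y, y \in s -> F x <= F y.
Proof.
elim: s => // a s IH _; case: (eqVneq s [::]) => [->|/IH [x xs Hx]].
  by exists a; rewrite ?inE // => y; rewrite inE => /eqP->.
case: (leP (F a) (F x)) => [le|lt].
  exists a; first by rewrite inE eqxx.
  by move=> y; rewrite inE => /orP[/eqP->//|/Hx]; apply: le_trans.
exists x; first by rewrite inE xs orbT.
by move=> y; rewrite inE => /orP[/eqP->|/Hx//]; apply: ltW.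
Qed.

Lemma circB a c b : circ a -> circ b -> circ (a - c *: b).
Proof.
move=> ca cb v.
rewrite (eq_bigr (fun e => a 0 e - c * b 0 e)); last by move=> e _; rewrite !mxE.
rewrite [RHS](eq_bigr (fun e => a 0 e - c * b 0 e)); last by move=> e _; rewrite !mxE.
by rewrite !sumrB -!mulr_sumr ca cb.
Qed.

Lemma sum_ge_term (P : pred 'I_m) (F : 'I_m -> R) f : P f ->
  (forall e, P e -> 0 <= F e) -> F f <= \sum_(e | P e) F e.
Proof.
move=> Pf F0; rewrite (bigD1 f) //= lerDl; apply: sumr_ge0 => e /andP[Pe _].
exact: F0.
Qed.

Lemma dec (y : 'rV[R]_m) : (forall e, 0 <= y 0 e) -> circ y ->
  exists L : seq (R * seq 'I_m), y = \sum_(p <- L) p.1 *: chi p.2 /\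
   (forall p, p \in L -> 0 <= p.1 /\ SC [set e | 0 < y 0 e] p.2).
Proof.
move=> y0 cy.
suff: forall (n : nat) (y : 'rV[R]_m), (#|[set e : 'I_m | (0 < y 0 e)%R]| <= n)%N -> (forall e, 0 <= y 0 e) -> circ y ->
  exists L : seq (R * seq 'I_m), y = \sum_(p <- L) p.1 *: chi p.2 /\
   (forall p, p \in L -> 0 <= p.1 /\ SC [set e | 0 < y 0 e] p.2).
  by move/(_ _ y (leqnn _) y0 cy).
clear y y0 cy; elim=> [|n IH] y sz y0 cy.
  exists [::]; split => //; rewrite big_nil; apply/rowP => e; rewrite mxE.
  move: sz; rewrite leqn0 cards_eq0 => /eqP /setP /(_ e); rewrite !inE => pe.
  by apply/eqP; rewrite eq_le y0 andbT leNgt pe.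
set S := [set e | 0 < y 0 e] in sz *.
case: (eqVneq S set0) => [S0|Sn0].
  exists [::]; split => //; rewrite big_nil; apply/rowP => e; rewrite mxE.
  move/setP: S0 => /(_ e); rewrite !inE => pe.
  by apply/eqP; rewrite eq_le y0 andbT leNgt pe.
have succ : forall f, f \in S -> exists2 g, g \in S & st g = ar f.
  move=> f; rewrite inE => yf.
  have : 0 < \sum_(e | st e == ar f) y 0 e.
    rewrite -cy; apply: lt_le_trans yf _; apply: sum_ge_term => //.
  case: (pickP [pred e | (st e == ar f) && (0 < y 0 e)]) => [g /andP[/eqP sg yg]|none].
    by exists g; rewrite ?inE.
  rewrite big1 ?ltxx // => e se; apply/eqP; rewrite eq_le y0 andbT leNgt.
  by move: (none e); rewrite /= se => /negbT.
have [s sS] := findcyc Sn0 succ.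
have sS' := sS; case/and4P: sS' => sne /andP[sall _] us _.
have [f0 f0s f0min] := exmin (fun e => y 0 e) sne.
set l := y 0 f0.
have lpos : 0 < l by rewrite /l; have := (allP sall) _ f0s; rewrite inE.
set y' := y - l *: chi s.
have y'E e : y' 0 e = y 0 e - l * (e \in s)%:R.
  by rewrite !mxE count_uniq_mem.
have y'0 e : 0 <= y' 0 e.
  rewrite y'E; case: (boolP (e \in s)) => es; last by rewrite mulr0 subr0.
  by rewrite mulr1 subr_ge0 f0min.
have y'le e : y' 0 e <= y 0 e.
  by rewrite y'E lerBlDr lerDl mulr_ge0 ?ler0n // ltW.
have cy' : circ y' by apply: circB => //; apply: circ_chi; case/and4P: sS => _ /andP[].
set S' := [set e | 0 < y' 0 e].
have sub : S' \subset S.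
  by apply/subsetP => e; rewrite !inE => /lt_le_trans; apply.
have prop : S' \proper S.
  apply/properP; split => //; exists f0; first exact: (allP sall).
  by rewrite inE y'E f0s mulr1 subrr ltxx.
have [L [yE LS]] := IH y' (leq_trans (proper_card prop) sz) y'0 cy'.
exists ((l, s) :: L); split.
  by rewrite big_cons /= -yE /y' addrC subrK.
move=> p; rewrite inE => /orP[/eqP->|pL]; first by split => //; apply: ltW.
by have [? ?] := LS p pL; split => //; apply: SC_sub sub _.
Qed.


Lemma cycvec_pos (s : seq 'I_m) f : s != [::] -> f \in s -> 0 < cycvec R s 0 f.
Proof.
move=> sne fs; rewrite mxE divr_gt0 // ltr0n.
  by rewrite -has_pred1 has_count in fs.
by case: s sne {fs}.
Qed.

Lemma cycvec0 (s : seq 'I_m) f : f \notin s -> cycvec R s 0 f = 0.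
Proof. by move=> fs; rewrite mxE (count_memPn fs) mul0r. Qed.

Lemma cycvec_ge0 (s : seq 'I_m) f : 0 <= cycvec R s 0 f.
Proof. by rewrite mxE divr_ge0 ?ler0n. Qed.

Lemma fullsc H : full st ar H -> forall e, e \in H -> exists s, SC H s /\ e \in s.
Proof.
move=> fH e eH; have [w [/andP[wH cw] ew]] := fH e eH.
have w0 f : 0 <= chi w 0 f by rewrite chiE ler0n.
have [L [yE LS]] := dec w0 (circ_chi cw).
have supp : [set f | 0 < chi w 0 f] \subset H.
  apply/subsetP => f; rewrite inE chiE ltr0n -has_count has_pred1 => fw.
  exact: (allP wH).
case: (boolP (has (fun p : R * seq 'I_m => e \in p.2) L)) => [/hasP [p pL ep]|].
  by exists p.2; split => //; apply: SC_sub supp (LS p pL).2.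
move/hasPn => nL; have := chiE w e; rewrite yE summxE big_seq big1.
  move/esym/eqP; rewrite pnatr_eq0 => /eqP; move/count_memPn; by rewrite ew.
by move=> p pL; rewrite !mxE (count_memPn (nL p pL)) mulr0.
Qed.

Definition cvx (S : 'rV[R]_m -> Prop) (k : nat) (p : 'I_k -> 'rV[R]_m) (l : 'I_k -> R) (x : 'rV[R]_m) :=
  [/\ forall i, S (p i), forall i, 0 <= l i, \sum_(i < k) l i = 1
      & x = \sum_(i < k) l i *: p i].

Lemma cvx_entry k (p : 'I_k -> 'rV[R]_m) l (x : 'rV[R]_m) e :
  x = \sum_(i < k) l i *: p i -> x 0 e = \sum_(i < k) l i * p i 0 e.
Proof. by move=> ->; rewrite summxE; apply: eq_bigr => i _; rewrite mxE. Qed.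

Lemma linf_sum k (l : 'I_k -> R) (p : 'I_k -> 'rV[R]_m) (c : 'rV[R]_m) :
  linf c (\sum_(i < k) l i *: p i) = \sum_(i < k) l i * linf c (p i).
Proof.
rewrite /linf (eq_bigr (fun e => \sum_(i < k) c 0 e * (l i * p i 0 e))).
  rewrite exchange_big; apply: eq_bigr => i _; rewrite mulr_sumr.
  by apply: eq_bigr => e _; rewrite mulrCA.
by move=> e _; rewrite summxE mulr_sumr; apply: eq_bigr => i _; rewrite mxE.
Qed.

Lemma PpolyP H (x : 'rV[R]_m) : Ppoly st ar R H x <->
  exists k p l, @cvx (fun y => exists s, SC H s /\ y = cycvec R s) k p l x.
Proof. by []. Qed.

Lemma Ppoly_ge0 H (x : 'rV[R]_m) e : Ppoly st ar R H x -> 0 <= x 0 e.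
Proof.
case=> k [p [l [Sp l0 _ xE]]]; rewrite (cvx_entry e xE); apply: sumr_ge0 => i _.
have [s [_ ->]] := Sp i.
by rewrite mulr_ge0 ?cycvec_ge0.
Qed.

Lemma Ppoly_cyc H s : SC H s -> Ppoly st ar R H (cycvec R s).
Proof.
move=> sc; exists 1, (fun _ => cycvec R s), (fun _ => 1); split => //.
- by move=> _; exists s.
- by rewrite big_ord1.
- by rewrite big_ord1 scale1r.
Qed.

Lemma PpolyPface H (x : 'rV[R]_m) : Ppoly st ar R H x <-> Pface st ar R H x.
Proof.
split.
  case=> k [p [l cv]]; split.
    exists k, p, l; case: cv => Sp l0 s1 xE; split => // i.
    have [s [sc ->]] := Sp i; exists s; split => //; apply: SC_sub sc.
    exact: subsetT.
  case: cv => Sp _ _ xE.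
  move=> e eH; rewrite (cvx_entry e xE) big1 // => i _.
  have [s [/and4P[_ /andP[sH _] _ _] ->]] := Sp i.
  rewrite cycvec0 ?mulr0 //; apply: contra eH; exact: (allP sH).
case=> [[k [p [l cv]]] offH].
have [Sp l0 s1 xE] := cv.
have [i0 li0] : exists i0, l i0 != 0.
  apply/existsP; apply: contraT; rewrite negb_exists => /forallP al.
  by move: s1; rewrite big1 => [/eqP|i _]; [rewrite eq_sym oner_eq0 | apply/eqP/negbNE].
have good i : l i != 0 -> exists s, SC H s /\ p i = cycvec R s.
  move=> li; have [s [sc pE]] := Sp i; exists s; split => //.
  case/and4P: sc => sne /andP[_ cy] u us; apply/and4P; split => //.
  apply/andP; split => //; apply/allP => f fs; apply: contraT => fH.
  have := offH f fH; rewrite (cvx_entry f xE) => /eqP; rewrite psumr_eq0; last first.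
    by move=> j _; have [t [_ ->]] := Sp j; rewrite mulr_ge0 ?cycvec_ge0.
  move=> /allP /(_ i (mem_index_enum _)) /= /eqP /eqP.
  by rewrite mulf_eq0 (negPf li) /= pE gt_eqF // cycvec_pos.
exists k, (fun i => if l i == 0 then p i0 else p i), l; split => //.
- by move=> i; case: eqP => [_|/eqP]; apply: good.
- rewrite xE; apply: eq_bigr => i _; case: eqP => [->|//]; by rewrite !scale0r.
Qed.


Lemma SC_setT H s : SC H s -> SC setT s.
Proof. by apply: SC_sub; apply: subsetT. Qed.

Lemma full_sc0 H : full st ar H -> H != set0 -> exists s, SC H s.
Proof. by move=> fH /set0Pn [e eH]; have [s [sc _]] := fullsc fH eH; exists s. Qed.

Lemma conj1 H : full st ar H -> H != set0 ->
  is_face (Ppoly st ar R [set: 'I_m]) (Pface st ar R H).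
Proof.
move=> fH Hn0; have [s0 sc0] := full_sc0 fH Hn0.
pose c : 'rV[R]_m := \row_e (e \notin H)%:R.
have lc y : linf c y = \sum_(e < m) (e \notin H)%:R * y 0 e.
  by apply: eq_bigr => e _; rewrite mxE.
have lc0 y : Pface st ar R H y -> linf c y = 0.
  case=> _ off; rewrite lc big1 // => e _; case: (boolP (e \in H)) => eH.
    by rewrite mul0r.
  by rewrite off // mulr0.
have lcge y : Ppoly st ar R [set: 'I_m] y -> 0 <= linf c y.
  by move=> Py; rewrite lc; apply: sumr_ge0 => e _; rewrite mulr_ge0 ?ler0n ?(Ppoly_ge0 e Py).
have F0 : Pface st ar R H (cycvec R s0) by apply/PpolyPface; apply: Ppoly_cyc.
split; first by exists (cycvec R s0).
exists c => x; split.
  move=> Fx; split; first by case: Fx.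
  by move=> y Py; rewrite lc0 // lcge.
case=> Px minx; split => // e eH.
have := minx _ F0.1; rewrite (lc0 _ F0) => lx.
have : linf c x == 0 by rewrite eq_le lx lcge.
rewrite lc psumr_eq0; last by move=> f _; rewrite mulr_ge0 ?ler0n ?(Ppoly_ge0 f Px).
by move/allP/(_ e (mem_index_enum _)); rewrite eH mul1r => /eqP.
Qed.

Lemma conj3 (H1 H2 : {set 'I_m}) : full st ar H1 ->
  (H1 \subset H2 <-> (forall x, Pface st ar R H1 x -> Pface st ar R H2 x)).
Proof.
move=> fH1; split.
  move=> sub x [Px off]; split => // e eH2; apply: off; apply: contra eH2.
  exact: (subsetP sub).
move=> impl; apply/subsetP => e eH1; have [s [sc es]] := fullsc fH1 eH1.
have [_ off] := impl _ (proj1 (PpolyPface H1 _) (Ppoly_cyc sc)).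
apply: contraT => eH2; have := off e eH2; move/eqP; rewrite gt_eqF //.
by apply: cycvec_pos => //; case/and4P: sc.
Qed.


Lemma linfD (c a b : 'rV[R]_m) : linf c (a + b) = linf c a + linf c b.
Proof. by rewrite /linf -big_split; apply: eq_bigr => e _; rewrite mxE mulrDr. Qed.

Lemma linfZ (c a : 'rV[R]_m) k : linf c (k *: a) = k * linf c a.
Proof. by rewrite /linf mulr_sumr; apply: eq_bigr => e _; rewrite mxE mulrCA. Qed.

Lemma linf0 (c : 'rV[R]_m) : linf c 0 = 0.
Proof. by rewrite /linf big1 // => e _; rewrite mxE mulr0. Qed.

Lemma linfB (c a b : 'rV[R]_m) : linf c (a - b) = linf c a - linf c b.
Proof. by rewrite -scaleN1r linfD linfZ mulN1r. Qed.

Lemma circ0 : circ 0.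
Proof. by move=> v; rewrite !big1 // => e _; rewrite mxE. Qed.

Lemma circD a b : circ a -> circ b -> circ (a + b).
Proof.
move=> ca cb; have := circB (-1) ca cb; rewrite scaleN1r opprK; exact.
Qed.

Lemma chi_cycvec (t : seq 'I_m) : t != [::] -> chi t = (size t)%:R *: cycvec R t.
Proof.
move=> tn; rewrite cycvecE scalerA divff ?scale1r //.
by rewrite pnatr_eq0; case: t tn.
Qed.

Lemma sum_chi (t : seq 'I_m) : \sum_(e < m) chi t 0 e = (size t)%:R.
Proof.
rewrite (eq_bigr (fun e => (count_mem e t)%:R)); last by move=> e _; rewrite chiE.
by rewrite (sum_count predT) count_predT.
Qed.

Definition decP (P : Prop) : bool :=
  if ClassicalEpsilon.excluded_middle_informative P then true else false.

Lemma decPE (P : Prop) : decP P <-> P.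
Proof. by rewrite /decP; case: ClassicalEpsilon.excluded_middle_informative. Qed.

Lemma Ppoly_dec (x : 'rV[R]_m) : Ppoly st ar R [set: 'I_m] x ->
  exists k (s : 'I_k -> seq 'I_m) (l : 'I_k -> R),
  [/\ forall i, SC setT (s i), forall i, 0 <= l i, \sum_(i < k) l i = 1
      & x = \sum_(i < k) l i *: cycvec R (s i)].
Proof.
case=> k [p [l [Sp l0 s1 xE]]].
have /fin_all_exists [s sE] : forall i : 'I_k, exists t, SC setT t /\ p i = cycvec R t.
  by move=> i; have [t ?] := Sp i; exists t.
exists k, s, l; split => //; first by move=> i; case: (sE i).
by rewrite xE; apply: eq_bigr => i _; case: (sE i) => _ ->.
Qed.

Lemma conj2 (F : 'rV[R]_m -> Prop) : is_face (Ppoly st ar R [set: 'I_m]) F ->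
  exists H : {set 'I_m}, [/\ full st ar H, H != set0 &
        forall x, F x <-> Pface st ar R H x].
Proof.
case=> [[x1 Fx1] [c Fc]].
have [Px1 min1] := (Fc x1).1 Fx1.
set mu := linf c x1.
pose val s := linf c (cycvec R s).
have ge s : SC setT s -> mu <= val s by move=> sc; apply: min1; apply: Ppoly_cyc.
have optF s : SC setT s -> val s = mu -> F (cycvec R s).
  move=> sc vs; apply/Fc; split; first exact: Ppoly_cyc.
  by move=> y Py; rewrite -/(val s) vs; apply: min1.
have Fmu y : F y -> linf c y = mu.
  move=> Fy; have [Py miny] := (Fc y).1 Fy.
  by apply/eqP; rewrite eq_le miny // min1.
have Fdec y k (s : 'I_k -> seq 'I_m) (l : 'I_k -> R) :
    F y -> (forall i, SC setT (s i)) -> (forall i, 0 <= l i) -> \sum_(i < k) l i = 1 ->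
    y = \sum_(i < k) l i *: cycvec R (s i) -> forall i, l i != 0 -> val (s i) = mu.
  move=> Fy sc l0 s1 yE.
  have : \sum_(i < k) l i * (val (s i) - mu) == 0.
    rewrite (eq_bigr (fun i => l i * val (s i) - l i * mu)); last by move=> i _; rewrite mulrBr.
    rewrite sumrB -mulr_suml s1 mul1r -(Fmu y Fy) yE subr_eq0.
    by rewrite (big_morph (linf c) (linfD c) (linf0 c)); apply/eqP; apply: eq_bigr => i _; rewrite linfZ.
  rewrite psumr_eq0; last by move=> i _; rewrite mulr_ge0 // subr_ge0 ge.
  move=> /allP al i li; have := al i (mem_index_enum _).
  by rewrite mulf_eq0 (negPf li) subr_eq0 => /eqP.
pose H := [set e | decP (exists x, F x /\ x 0 e != 0)].
have inH e : e \in H <-> exists x, F x /\ x 0 e != 0 by rewrite inE decPE.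
have optsub s : SC setT s -> val s = mu -> forall e, e \in s -> e \in H.
  move=> sc vs e es; apply/inH; exists (cycvec R s); split; first exact: optF.
  by rewrite gt_eqF // cycvec_pos //; case/and4P: sc.
have Hcyc e : e \in H -> exists s, [/\ SC setT s, val s = mu & e \in s].
  move/inH => [y [Fy ye]]; have [Py _] := (Fc y).1 Fy.
  have [k [s [l [sc l0 s1 yE]]]] := Ppoly_dec Py.
  have [i li] : exists i, l i * cycvec R (s i) 0 e != 0.
    apply/existsP; apply: contraT; rewrite negb_exists => /forallP al.
    move: ye; rewrite (cvx_entry e yE) big1 ?eqxx // => i _.
    by apply/eqP/negbNE.
  exists (s i); split => //.
    by apply: (Fdec y k s l) => //; apply: contraNneq li => ->; rewrite mul0r.
  by apply: contraT => ns; move: li; rewrite cycvec0 // mulr0 eqxx.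
have KEY s3 : SC H s3 -> val s3 = mu.
  move=> sc3; apply/eqP; rewrite eq_le ge ?andbT; last exact: SC_setT sc3.
  have /fin_all_exists [T TE] : forall e : 'I_m, exists t,
      e \in H -> [/\ SC setT t, val t = mu & e \in t].
    move=> e; case: (boolP (e \in H)) => eH; last by exists [::].
    by have [t ?] := Hcyc e eH; exists t.
  pose g := \sum_(e < m | e \in H) chi (T e).
  pose z := g - 1 *: chi s3.
  have gE f : g 0 f = \sum_(e < m | e \in H) (count_mem f (T e))%:R.
    by rewrite summxE; apply: eq_bigr => e _; rewrite chiE.
  case/and4P: (sc3) => s3n /andP[s3H cy3] u3 _.
  have z0 f : 0 <= z 0 f.
    rewrite !mxE mul1r count_uniq_mem // gE subr_ge0.
    case: (boolP (f \in s3)) => fs; last by rewrite sumr_ge0 // => e _; rewrite ler0n.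
    have fH : f \in H by apply: (allP s3H).
    apply: (le_trans _ (sum_ge_term (F := fun e => (count_mem f (T e))%:R) fH _)); last first.
      by move=> *; rewrite ler0n.
    by rewrite ler_nat lt0n; case: (TE f fH) => _ _ /count_memPn/eqP ->.
  have cg : circ g.
    apply: (big_ind circ circ0 circD) => e eH; apply: circ_chi.
    by case: (TE e eH) => /and4P[_ /andP[_ cy] _ _].
  have [L [zE LS]] := dec z0 (circB 1 cg (circ_chi cy3)).
  pose c' : 'rV[R]_m := c - mu *: \row_(e < m) 1.
  have lc' t : SC setT t -> linf c' (chi t) = (size t)%:R * (val t - mu).
    case/and4P => tn _ _ _.
    rewrite /linf (eq_bigr (fun e => c 0 e * chi t 0 e - mu * chi t 0 e)); last first.
      by move=> e _; rewrite !mxE mulr1 mulrBl.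
    rewrite sumrB -mulr_sumr sum_chi -/(linf c (chi t)) chi_cycvec // linfZ.
    by rewrite mulrBr [mu * _]mulrC.
  have : 0 <= linf c' z.
    rewrite zE (big_morph (linf c') (linfD c') (linf0 c')) big_seq.
    apply: sumr_ge0 => p pL; have [p0 scp] := LS p pL.
    rewrite linfZ lc' ?mulr_ge0 ?ler0n ?subr_ge0 ?ge //; exact: SC_setT scp.
  rewrite linfB linfZ mul1r (big_morph (linf c') (linfD c') (linf0 c')) big1.
    rewrite sub0r oppr_ge0 lc' ?pmulr_rle0 ?subr_le0 //; last exact: SC_setT sc3.
    by rewrite ltr0n; case: (s3) s3n.
  by move=> e eH; case: (TE e eH) => ? vt _; rewrite lc' // vt subrr mulr0.
exists H; split.
- move=> e eH; have [s [sc vs es]] := Hcyc e eH; exists s; split => //.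
  case/and4P: (sc) => _ /andP[_ cy] _ _; apply/andP; split => //.
  by apply/allP => f fs; apply: optsub sc vs f fs.
- have [k [s [l [sc l0 s1 xE]]]] := Ppoly_dec Px1.
  have [i li] : exists i, l i != 0.
    apply/existsP; apply: contraT; rewrite negb_exists => /forallP al.
    by move: s1; rewrite big1 => [/eqP|j _]; [rewrite eq_sym oner_eq0 | apply/eqP/negbNE].
  have vs := Fdec x1 k s l Fx1 sc l0 s1 xE i li.
  have sci := sc i; case/and4P: (sci) => sne _ _ _.
  case E: (s i) sne => [//|e t] _.
  by apply/set0Pn; exists e; apply: (optsub (s i) sci vs e); rewrite E inE eqxx.
move=> x; split.
  move=> Fx; have [Px _] := (Fc x).1 Fx; split => // e eH.
  by apply/eqP; apply: contraNT eH => xe; apply/inH; exists x.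
move=> /PpolyPface Px; apply/Fc.
have PGx : Ppoly st ar R [set: 'I_m] x by case: (proj1 (PpolyPface H x) Px).
split => // y Py; apply: le_trans (min1 y Py).
case: Px => k [p [l [Sp l0 s1 xE]]].
rewrite xE linf_sum (eq_bigr (fun i => l i * mu)); first by rewrite -mulr_suml s1 mul1r.
by move=> i _; have [s [sc ->]] := Sp i; rewrite -/(val s) KEY.
Qed.


Lemma sumV (F : V -> R) : \sum_(j < #|V|) F (enum_val j) = \sum_v F v.
Proof. by rewrite -big_enum_val. Qed.

Lemma sum_pick (T : finType) (a : T) (F : T -> R) :
  \sum_(v : T) F v * (a == v)%:R = F a.
Proof.
rewrite (bigD1 a) //= eqxx mulr1 big1 ?addr0 // => v va.
by rewrite eq_sym (negPf va) mulr0.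
Qed.

Definition Nmx (H : {set 'I_m}) : 'M[R]_(m, #|V|) :=
  \matrix_(e, j) ((e \in H)%:R * ((ar e == enum_val j)%:R - (st e == enum_val j)%:R)).

Lemma adj_sym (H : {set 'I_m}) : symmetric (adjH st ar H).
Proof.
move=> u v; rewrite /adjH; apply/existsP/existsP => [[e He]|[e He]]; exists e;
  by move: He; rewrite orbC.
Qed.

Lemma adj_edge (H : {set 'I_m}) e : e \in H -> adjH st ar H (st e) (ar e).
Proof. by move=> eH; apply/existsP; exists e; rewrite eH !eqxx. Qed.

Lemma mulN_entry (H : {set 'I_m}) k (z : 'M[R]_(k, #|V|)) i e :
  (z *m (Nmx H)^T) i e = (e \in H)%:R * (z i (enum_rank (ar e)) - z i (enum_rank (st e))).
Proof.
rewrite mxE (eq_bigr (fun j => (e \in H)%:R *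
   (z i (enum_rank (enum_val j)) * (ar e == enum_val j)%:R
    - z i (enum_rank (enum_val j)) * (st e == enum_val j)%:R))); last first.
  by move=> j _; rewrite !mxE enum_valK mulrCA mulrBr.
by rewrite -mulr_sumr sumrB !(sumV (fun v => z i (enum_rank v) * (_ == v)%:R)) !sum_pick.
Qed.

Lemma rankN (H : {set 'I_m}) : (\rank (Nmx H) + ncomp st ar H)%N = #|V|.
Proof.
set e' := adjH st ar H.
have csym : connect_sym e' by apply: sym_connect_sym; apply: adj_sym.
pose Rt := roots e'.
have cE : ncomp st ar H = #|Rt|.
  by rewrite /ncomp /n_comp_mem; apply: eq_card => x; rewrite !inE andbT.
have rootRt (i : 'I_#|Rt|) : fingraph.root e' (enum_val i) = enum_val i.
  by apply/eqP; have := enum_valP i.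
pose Pot : 'M[R]_(#|Rt|, #|V|) :=
  \matrix_(i, j) (fingraph.root e' (enum_val j) == enum_val i)%:R.
have potN : Pot *m (Nmx H)^T = 0.
  apply/matrixP => i e; rewrite mulN_entry !mxE !enum_rankK.
  case eH: (e \in H); last by rewrite mul0r.
  have := adj_edge eH; move/connect1; move/(fingraph.rootP csym) => ->.
  by rewrite subrr mulr0.
have potfree : row_free Pot.
  apply/row_freeP; exists (\matrix_(j, i) (enum_val j == enum_val i :> V)%:R).
  apply/matrixP => i i'; rewrite !mxE.
  rewrite (eq_bigr (fun j => (fingraph.root e' (enum_val j) == enum_val i)%:R *
           (enum_val i' == enum_val j)%:R)); last by move=> j _; rewrite !mxE (eq_sym (enum_val j) (enum_val i')).
  rewrite (sumV (fun v => (fingraph.root e' v == enum_val i)%:R * (enum_val i' == v)%:R)).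
  by rewrite sum_pick rootRt (inj_eq enum_val_inj) eq_sym.
have kerP : (kermx (Nmx H)^T <= Pot)%MS.
  apply/row_subP => a; set z := row a _.
  have zN : z *m (Nmx H)^T = 0 by rewrite -row_mul mulmx_ker row0.
  clearbody z.
  pose zf v := z 0 (enum_rank v).
  have zfE f : f \in H -> zf (ar f) = zf (st f).
    move=> fH; have := mulN_entry H z 0 f; rewrite zN mxE fH mul1r => /esym/eqP.
    by rewrite subr_eq0 => /eqP.
  have zadj x y : e' x y -> zf x = zf y.
    case/existsP => f /andP[fH /orP[/andP[/eqP<- /eqP<-]|/andP[/eqP<- /eqP<-]]].
      by rewrite zfE.
    by rewrite zfE.
  have zcon x y : connect e' x y -> zf x = zf y.
    case/connectP => p; elim: p x => [|w p IH] x /=; first by move=> _ ->.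
    by case/andP => exw pw yE; rewrite (zadj _ _ exw) (IH w pw yE).
  apply/submxP; exists (\row_i zf (enum_val i)); apply/rowP => j.
  rewrite !mxE (eq_bigr (fun i => zf (enum_val i) *
     (fingraph.root e' (enum_val j) == enum_val i)%:R)); last by move=> i _; rewrite !mxE.
  rewrite -(big_enum_val (A := Rt) (fun x => zf x * (fingraph.root e' (enum_val j) == x)%:R)).
  have rj : fingraph.root e' (enum_val j) \in Rt by rewrite inE /Rt /roots root_root.
  rewrite (bigD1 _ rj) /= eqxx mulr1 big1 ?addr0; last first.
    by move=> x /andP[_ nx]; rewrite eq_sym (negPf nx) mulr0.
  rewrite -(zcon _ _ (connect_root _ _)) /zf enum_valK.
  done.
have potK : (Pot <= kermx (Nmx H)^T)%MS by rewrite sub_kermx potN.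
have rk : \rank (kermx (Nmx H)^T) = #|Rt|.
  transitivity (\rank Pot); last exact/eqP.
  by apply/eqP; rewrite eqn_leq (mxrankS kerP) (mxrankS potK).
move: rk; rewrite mxrank_ker mxrank_tr cE => <-.
by rewrite subnKC // rank_leq_col.
Qed.


Definition Sel (H : {set 'I_m}) : 'M[R]_(#|H|, m) := \matrix_(i, e) (e == enum_val i)%:R.

Lemma sel_sub (H : {set 'I_m}) (y : 'rV[R]_m) :
  (forall e, e \notin H -> y 0 e = 0) -> (y <= Sel H)%MS.
Proof.
move=> off; apply/submxP; exists (\row_i y 0 (enum_val i)); apply/rowP => e.
rewrite !mxE (eq_bigr (fun i => y 0 (enum_val i) * (e == enum_val i)%:R)); last first.
  by move=> i _; rewrite !mxE.
rewrite -(big_enum_val (fun x => y 0 x * (e == x)%:R)).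
case: (boolP (e \in H)) => eH.
  rewrite (bigD1 e eH) /= eqxx mulr1 big1 ?addr0 // => x /andP[_ xe].
  by rewrite eq_sym (negPf xe) mulr0.
rewrite off // big1 // => x xH; case: eqP => [ex|]; last by rewrite mulr0.
by rewrite ex xH in eH.
Qed.

Lemma sel_supp (H : {set 'I_m}) (y : 'rV[R]_m) :
  (y <= Sel H)%MS -> forall e, e \notin H -> y 0 e = 0.
Proof.
case/submxP => u -> e eH; rewrite mxE big1 // => i _; rewrite mxE.
case: eqP => [ei|]; last by rewrite mulr0.
by have := enum_valP i; rewrite -ei (negPf eH).
Qed.

Lemma sel_rank (H : {set 'I_m}) : \rank (Sel H) = #|H|.
Proof.
apply/eqP; apply/row_freeP; exists (Sel H)^T; apply/matrixP => i i'.
rewrite !mxE (eq_bigr (fun e => (enum_val i' == e)%:R * (enum_val i == e)%:R)); last first.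
  by move=> e _; rewrite !mxE mulrC !(eq_sym e).
by rewrite (sum_pick (enum_val i) (fun e => (enum_val i' == e)%:R)) (inj_eq enum_val_inj) eq_sym.
Qed.

Lemma rankK (H : {set 'I_m}) :
  (\rank (Sel H :&: kermx (Nmx H))%MS + \rank (Nmx H))%N = #|H|.
Proof.
have full1 : (1%:M <= Sel H + kermx (Nmx H))%MS.
  apply/row_subP => e; rewrite row1.
  case: (boolP (e \in H)) => eH.
    apply: submx_trans (addsmxSl _ _); apply: sel_sub => f fH; rewrite mxE eqxx /=.
    by case: eqP => [fe|//]; rewrite fe eH in fH.
  apply: submx_trans (addsmxSr _ _); rewrite sub_kermx -rowE.
  by apply/eqP/rowP => j; rewrite !mxE (negPf eH) mul0r.
have rs : \rank (Sel H + kermx (Nmx H))%MS = m.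
  by apply/eqP; rewrite eqn_leq rank_leq_col /= -{1}(mxrank1 R m) mxrankS.
have := mxrank_sum_cap (Sel H) (kermx (Nmx H)).
rewrite rs sel_rank mxrank_ker.
have := rank_leq_row (Nmx H); lia.
Qed.


Fixpoint allseqs (n : nat) : seq (seq 'I_m) :=
  if n is n'.+1 then [::] :: [seq e :: s | e <- enum 'I_m, s <- allseqs n']
  else [:: [::]].

Lemma mem_allseqs (n : nat) (s : seq 'I_m) : (size s <= n)%N -> s \in allseqs n.
Proof.
elim: n s => [|n IH] [|e t] //= sz; rewrite inE ?eqxx //.
apply/orP; right; apply: (allpairs_f (fun e s => e :: s)).
  by rewrite mem_enum.
exact: IH.
Qed.

Definition cyc (H : {set 'I_m}) := [seq s <- allseqs #|V| | SC H s].

Lemma mem_cyc H s : SC H s -> s \in cyc H.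
Proof.
move=> sc; rewrite mem_filter sc /=; apply: mem_allseqs.
case/and4P: sc => _ _ _ us; rewrite -(size_map st) -(card_uniqP us).
exact: max_card.
Qed.

Lemma cyc_SC H s : s \in cyc H -> SC H s.
Proof. by rewrite mem_filter => /andP[]. Qed.

Lemma circN (H : {set 'I_m}) (y : 'rV[R]_m) :
  (forall e, e \notin H -> y 0 e = 0) -> circ y <-> y *m Nmx H = 0.
Proof.
move=> off.
have E j : (y *m Nmx H) 0 j = \sum_(e < m | ar e == enum_val j) y 0 e
                             - \sum_(e < m | st e == enum_val j) y 0 e.
  rewrite mxE !(big_mkcond (fun e => ar e == _)) !(big_mkcond (fun e => st e == _)) /=.
  rewrite -sumrB; apply: eq_bigr => e _; rewrite mxE.
  case: (boolP (e \in H)) => eH; last by rewrite off // !mul0r !if_same subrr.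
  by rewrite mul1r mulrBr; case: (ar e == _); case: (st e == _); rewrite ?mulr1 ?mulr0 ?subr0.
split.
  by move=> cy; apply/rowP => j; rewrite E cy subrr mxE.
move=> yN v; apply/eqP; rewrite -subr_eq0; have := E (enum_rank v).
by rewrite yN mxE enum_rankK => <-.
Qed.

Lemma sum_cycvec (s : seq 'I_m) : s != [::] -> \sum_(e < m) cycvec R s 0 e = 1.
Proof.
move=> sn; rewrite (eq_bigr (fun e => (size s)%:R^-1 * chi s 0 e)); last first.
  by move=> e _; rewrite cycvecE mxE.
by rewrite -mulr_sumr sum_chi mulVf // pnatr_eq0; case: s sn.
Qed.


Lemma conj5 (H : {set 'I_m}) : full st ar H -> H != set0 ->
  exists d : nat, affdim (Pface st ar R H) d /\
       (d%:Z = #|H|%:Z - #|V|%:Z + (ncomp st ar H)%:Z - 1)%R.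
Proof.
move=> fH Hn0; have [s0 sc0] := full_sc0 fH Hn0.
set L := cyc H; set k := size L.
pose x0 := cycvec R s0.
pose Cm : 'M[R]_(k, m) := \matrix_(i, e) cycvec R (nth [::] L i) 0 e.
pose Dm : 'M[R]_(k, m) := \matrix_(i, e) (cycvec R (nth [::] L i) 0 e - x0 0 e).
have rowC i : row i Cm = cycvec R (nth [::] L i) by apply/rowP => e; rewrite !mxE.
have rowD i : row i Dm = cycvec R (nth [::] L i) - x0 by apply/rowP => e; rewrite !mxE.
have scL (i : 'I_k) : SC H (nth [::] L i) by apply: cyc_SC; apply: mem_nth.
have idx s : SC H s -> exists i : 'I_k, nth [::] L i = s.
  move=> sc; have sL := mem_cyc sc; rewrite -index_mem in sL.
  by exists (Ordinal sL); rewrite /= nth_index // mem_cyc.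
have cycC s : SC H s -> (cycvec R s <= Cm)%MS.
  by move=> /idx [i <-]; rewrite -rowC row_sub.
have chiC s : SC H s -> (chi s <= Cm)%MS.
  move=> sc; rewrite chi_cycvec ?scalemx_sub ?cycC //.
  by case/and4P: sc.
have suppC s : SC H s -> forall e, e \notin H -> cycvec R s 0 e = 0.
  move=> /and4P[_ /andP[sH _] _ _] e eH; apply: cycvec0; apply: contra eH.
  exact: (allP sH).
have circC s : SC H s -> circ (cycvec R s).
  move=> sc; rewrite cycvecE; have := circB (- (size s)%:R^-1) circ0 (circ_chi (s := s) _).
  rewrite sub0r scaleNr opprK; apply.
  by case/and4P: sc => _ /andP[].
set K := (Sel H :&: kermx (Nmx H))%MS.
have CK : (Cm <= K)%MS.
  apply/row_subP => i; rewrite rowC sub_capmx; apply/andP; split.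
    by apply: sel_sub; apply: suppC; exact: scL.
  by rewrite sub_kermx; apply/eqP/circN; [apply: suppC; exact: scL | apply: circC; exact: scL].
have KC : (K <= Cm)%MS.
  apply/row_subP => a; set y := row a K.
  have yK : (y <= K)%MS by apply: row_sub.
  have offy := sel_supp (submx_trans yK (capmxSl _ _)).
  have cy : circ y.
    apply/(circN offy); apply/eqP; rewrite -sub_kermx.
    exact: submx_trans yK (capmxSr _ _).
  have /fin_all_exists [T TE] : forall e : 'I_m, exists t, e \in H -> SC H t /\ e \in t.
    move=> e; case: (boolP (e \in H)) => eH; last by exists [::].
    by have [t ?] := fullsc fH eH; exists t.
  pose g := \sum_(e < m | e \in H) chi (T e).
  have gC : (g <= Cm)%MS by apply: summx_sub => e eH; apply: chiC; case: (TE e eH).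
  have cg : circ g.
    apply: (big_ind circ circ0 circD) => e eH; apply: circ_chi.
    by case: (TE e eH) => /and4P[_ /andP[_ cy'] _ _].
  have gE f : g 0 f = \sum_(e < m | e \in H) (count_mem f (T e))%:R.
    by rewrite summxE; apply: eq_bigr => e _; rewrite chiE.
  have g1 f : f \in H -> 1 <= g 0 f.
    move=> fH'; rewrite gE.
    apply: (le_trans _ (sum_ge_term (F := fun e => (count_mem f (T e))%:R) fH' _)); last first.
      by move=> *; rewrite ler0n.
    by rewrite ler1n lt0n; case: (TE f fH') => _ /count_memPn/eqP.
  have g0 f : f \notin H -> g 0 f = 0.
    move=> fH'; rewrite gE big1 // => e eH; apply/eqP; rewrite pnatr_eq0; apply/eqP.
    apply/count_memPn; apply: contra fH'; case: (TE e eH) => /and4P[_ /andP[tH _] _ _] _.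
    exact: (allP tH).
  pose t := \sum_(e < m) `|y 0 e|.
  have t0 : 0 <= t by apply: sumr_ge0 => *; apply: normr_ge0.
  pose z := y - (- t) *: g.
  have zE f : z 0 f = y 0 f + t * g 0 f by rewrite !mxE mulNr opprK.
  have z0 f : 0 <= z 0 f.
    rewrite zE; case: (boolP (f \in H)) => fH'; last by rewrite offy // g0 // mulr0 addr0.
    have h1 : `|y 0 f| <= t.
      by apply: (sum_ge_term (P := predT) (F := fun e => `|y 0 e|)) => // *; apply: normr_ge0.
    have h2 : t <= t * g 0 f by apply: ler_peMr => //; apply: g1.
    have h3 := ler_norm (- y 0 f); rewrite normrN in h3.
    lra.
  have cz : circ z by apply: circB.
  have [Lz [zdec LS]] := dec z0 cz.
  have suppz : [set e | 0 < z 0 e] \subset H.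
    apply/subsetP => f; rewrite inE; apply: contraTT => fH'.
    by rewrite zE offy // g0 // mulr0 addr0 ltxx.
  have zC : (z <= Cm)%MS.
    rewrite zdec big_seq; apply: summx_sub => p pL; apply: scalemx_sub; apply: chiC.
    exact: SC_sub suppz (LS p pL).2.
  have -> : y = z + (- t) *: g by rewrite /z subrK.
  by apply: addmx_sub => //; apply: scalemx_sub.
have rCK : \rank Cm = \rank K by apply/eqP; rewrite eqn_leq (mxrankS CK) (mxrankS KC).
have x0C : (x0 <= Cm)%MS by apply: cycC.
have DC : (Dm <= Cm)%MS.
  apply/row_subP => i; rewrite rowD; apply: addmx_sub; first exact: cycC.
  by rewrite -scaleN1r scalemx_sub.
have CD : (Cm <= Dm + x0)%MS.
  apply/row_subP => i; rewrite rowC -[cycvec R _](subrK x0) -rowD.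
  by apply: addmx_sub; [apply: submx_trans (addsmxSl _ _); apply: row_sub | apply: addsmxSr].
have rCD : \rank Cm = \rank (Dm + x0)%MS.
  by apply/eqP; rewrite eqn_leq (mxrankS CD) mxrankS // addsmx_sub DC.
pose ones : 'cV[R]_m := const_mx 1.
have onesD : Dm *m ones = 0.
  apply/matrixP => i j; rewrite !mxE (eq_bigr (fun e => cycvec R (nth [::] L i) 0 e - x0 0 e)).
    rewrite sumrB !sum_cycvec ?subrr //; first by case/and4P: sc0.
    by case/and4P: (scL i).
  by move=> e _; rewrite !mxE mulr1.
have onesx0 : (x0 *m ones) 0 0 = 1.
  rewrite mxE (eq_bigr (fun e => x0 0 e)); last by move=> e _; rewrite [ones _ _]mxE mulr1.
  by rewrite sum_cycvec //; case/and4P: sc0.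
have rx0 : \rank x0 = 1%N.
  rewrite rank_rV; apply/eqP; rewrite eqb1; apply/eqP => x00.
  by move: onesx0; rewrite x00 mul0mx mxE => /eqP; rewrite eq_sym oner_eq0.
have rcap : \rank (Dm :&: x0)%MS = 0%N.
  have [le eqc] := mxrank_leqif_sup (capmxSr Dm x0); rewrite rx0 in le eqc.
  case: (posnP (\rank (Dm :&: x0)%MS)) => // pos.
  have : (\rank (Dm :&: x0)%MS == 1)%N by rewrite eqn_leq le pos.
  rewrite eqc => x0cap.
  have : (x0 <= Dm)%MS := submx_trans x0cap (capmxSl _ _).
  case/submxP => u x0E; move: onesx0; rewrite x0E -mulmxA onesD mulmx0 mxE => /eqP.
  by rewrite eq_sym oner_eq0.
have rD : \rank Cm = (\rank Dm).+1.
  by rewrite rCD; have := mxrank_sum_cap Dm x0; rewrite rcap rx0 addn0 addn1.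
exists (\rank Dm); split.
  exists x0; split; first by apply/PpolyPface; apply: Ppoly_cyc.
  exists (rowsub (maxrankfun Dm) Dm); split.
  - by rewrite (eq_maxrowsub Dm).
  - move=> i; rewrite row_rowsub rowD; exists (cycvec R (nth [::] L (maxrankfun Dm i))).
    by split => //; apply/PpolyPface; apply: Ppoly_cyc.
  move=> x /PpolyPface [kk [p [l [Sp l0 s1 xE]]]].
  rewrite (eq_maxrowsub Dm).
  have -> : x - x0 = \sum_(i < kk) l i *: (p i - x0).
    rewrite xE [RHS](eq_bigr (fun i => l i *: p i - l i *: x0)); last by move=> i _; rewrite scalerBr.
    by rewrite sumrB -scaler_suml s1 scale1r.
  apply: summx_sub => i _; apply: scalemx_sub.
  have [s [sc ->]] := Sp i; have [j <-] := idx s sc; rewrite -rowD; exact: row_sub.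
have := rankK H; have := rankN H; rewrite -rCK rD.
lia.
Qed.

End Main.

Theorem mainTheorem6 (V : finType) (m : nat) (st ar : 'I_m -> V)
    (R : realFieldType) :
  (* H |-> P(G)_H maps full subgraphs with non-empty edge set to faces *)
  (forall H : {set 'I_m}, full st ar H -> H != set0 ->
     is_face (Ppoly st ar R [set: 'I_m]) (Pface st ar R H)) /\
  (* surjective onto the faces *)
  (forall F : 'rV[R]_m -> Prop, is_face (Ppoly st ar R [set: 'I_m]) F ->
     exists H : {set 'I_m}, [/\ full st ar H, H != set0 &
        forall x, F x <-> Pface st ar R H x]) /\
  (* order isomorphism (hence injective) *)
  (forall H1 H2 : {set 'I_m}, full st ar H1 -> H1 != set0 ->
     full st ar H2 -> H2 != set0 ->
     (H1 \subset H2 <-> (forall x, Pface st ar R H1 x -> Pface st ar R H2 x))) /\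
  (* P(H) = P(G)_H *)
  (forall H : {set 'I_m}, full st ar H -> H != set0 ->
     forall x, Ppoly st ar R H x <-> Pface st ar R H x) /\
  (* dimension formula *)
  (forall H : {set 'I_m}, full st ar H -> H != set0 ->
     exists d : nat, affdim (Pface st ar R H) d /\
       (d%:Z = #|H|%:Z - #|V|%:Z + (ncomp st ar H)%:Z - 1)%R).
Proof.
split; first by move=> H fH Hn; exact: conj1.
split; first by move=> F; exact: conj2.
split; first by move=> H1 H2 fH1 _ _ _; exact: conj3.
split; first by move=> H _ _ x; exact: PpolyPface.
by move=> H fH Hn; exact: conj5.
Qed.
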